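(* Let $\mathcal{F}$ be a fusion ring with structure constants $(N_{i,j}^k)$, indexed so that index $1$ is the unit. Suppose indices $i_1,\dots,i_9$ satisfy $N_{i_4,i_1}^{i_6},\ N_{i_5,i_4}^{i_2},\ N_{i_5,i_6}^{i_3},\ N_{i_7,i_9}^{i_1},\ N_{i_2,i_7}^{i_8},\ N_{i_8,i_9}^{i_3}\neq0$ and $\sum_kN_{i_4,i_7}^kN_{i_5^*,i_8}^kN_{i_6,i_9^*}^k=0$. Then $i_j\neq1$ for all $j\in\{4,\dots,9\}$.
   Context: A fusion ring is a ring which is a free $\mathbb{Z}$-module with finite basis $\{b_1,\dots,b_r\}$, $b_ib_j=\sum_kN_{i,j}^kb_k$, $N_{i,j}^k\in\mathbb{Z}_{\ge0}$, associative, unit $b_1$, duality $i\mapsto i^*$ with $N_{i,k}^1=N_{k,i}^1=\delta_{i^*,k}$, and Frobenius reciprocity $N_{i,j}^k=N_{i^*,k}^j=N_{k,j^*}^i$. *)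

(* Defs.v *)
From mathcomp Require Import all_boot.
Set Implicit Arguments. Unset Strict Implicit. Unset Printing Implicit Defensive.

(* A fusion ring of rank r = n.+1 with basis b_0, ..., b_n indexed by 'I_n.+1.
   The paper's index 1 (the unit b_1) is ord0 here.  The ring is determined by
   its structure constants N i j k = N_{i,j}^k (nonnegative integers) and the
   duality map d : i |-> i^*. *)
Definition fusion_ring (n : nat) (N : 'I_n.+1 -> 'I_n.+1 -> 'I_n.+1 -> nat)
    (d : 'I_n.+1 -> 'I_n.+1) : Prop :=
  (forall i j k t : 'I_n.+1,
      \sum_(s < n.+1) N i j s * N s k t = \sum_(s < n.+1) N j k s * N i s t) /\
  (forall i j : 'I_n.+1, N ord0 i j = (i == j) /\ N i ord0 j = (i == j)) /\
  (forall i k : 'I_n.+1, N i k ord0 = (d i == k) /\ N k i ord0 = (d i == k)) /\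
  (forall i j k : 'I_n.+1, N i j k = N (d i) k j /\ N i j k = N k (d j) i).

(* Main.v *)
Require Import Defs.
From mathcomp Require Import all_boot.
Set Implicit Arguments. Unset Strict Implicit.

Section Aux.
Variables (n : nat) (N : 'I_n.+1 -> 'I_n.+1 -> 'I_n.+1 -> nat) (d : 'I_n.+1 -> 'I_n.+1).
Hypothesis HF : fusion_ring N d.

Lemma uL i j : N ord0 i j != 0 -> i = j.
Proof. case: HF => _ [H _]; rewrite (H i j).1; by case: (i =P j). Qed.
Lemma uR i j : N i ord0 j != 0 -> i = j.
Proof. case: HF => _ [H _]; rewrite (H i j).2; by case: (i =P j). Qed.
Lemma uL1 i : N ord0 i i = 1.
Proof. case: HF => _ [H _]; by rewrite (H i i).1 eqxx. Qed.
Lemma uR1 i : N i ord0 i = 1.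
Proof. case: HF => _ [H _]; by rewrite (H i i).2 eqxx. Qed.
Lemma dd i : d (d i) = i.
Proof.
case: HF => _ [_ [H _]].
have := (H (d i) i).1. have := (H i (d i)).2. rewrite eqxx => ->.
by case: eqP.
Qed.
Lemma dz : d ord0 = ord0.
Proof.
case: HF => _ [H [H' _]].
have := (H' ord0 ord0).1. rewrite (H ord0 ord0).1 eqxx. by case: eqP.
Qed.
Lemma uD i k : N i k ord0 != 0 -> d i = k.
Proof. case: HF => _ [_ [H _]]; rewrite (H i k).1; by case: (d i =P k). Qed.
Lemma F1 i j k : N (d i) k j = N i j k.
Proof. case: HF => _ [_ [_ H]]; by rewrite (H i j k).1. Qed.
Lemma F2 i j k : N k (d j) i = N i j k.
Proof. case: HF => _ [_ [_ H]]; by rewrite (H i j k).2. Qed.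
Lemma cyc i j k : N (d k) i (d j) = N i j k.
Proof. by rewrite F1 F2. Qed.
Lemma cyc2 i j k : N j (d k) (d i) = N i j k.
Proof. by rewrite -(cyc j) !dd. Qed.
End Aux.

Lemma sum0 n (F : 'I_n.+1 -> nat) k : \sum_(k < n.+1) F k = 0 -> F k = 0.
Proof. rewrite (bigD1 k) //= => /eqP; rewrite addn_eq0 => /andP [/eqP -> _] //. Qed.

Theorem lemma7p14 (n : nat) (N : 'I_n.+1 -> 'I_n.+1 -> 'I_n.+1 -> nat)
    (d : 'I_n.+1 -> 'I_n.+1) (HF : fusion_ring N d)
    (i1 i2 i3 i4 i5 i6 i7 i8 i9 : 'I_n.+1) :
  N i4 i1 i6 != 0 -> N i5 i4 i2 != 0 -> N i5 i6 i3 != 0 ->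
  N i7 i9 i1 != 0 -> N i2 i7 i8 != 0 -> N i8 i9 i3 != 0 ->
  \sum_(k < n.+1) N i4 i7 k * N (d i5) i8 k * N i6 (d i9) k = 0 ->
  (i4 != ord0) /\ (i5 != ord0) /\ (i6 != ord0) /\ (i7 != ord0) /\ (i8 != ord0) /\ (i9 != ord0).
Proof.
move=> H1 H2 H3 H4 H5 H6 S.
have fin : forall a b, a != 0 -> b != 0 -> a * b = 0 -> False.
  move=> a b Ha Hb /eqP; rewrite muln_eq0; by case/orP => /eqP E; move: Ha Hb; rewrite E.
split; [|split; [|split; [|split; [|split]]]]; apply/eqP => E; subst.
- have E1 := uL HF H1; have E2 := uR HF H2; subst.
  have := sum0 i7 S; rewrite (uL1 HF) mul1n (F1 HF) (F2 HF). exact: fin.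
- rewrite (dz HF) in S.
  have E1 := uL HF H2; have E2 := uL HF H3; subst.
  have := sum0 i8 S; rewrite (uL1 HF) muln1 (F2 HF). exact: fin.
- have E1 := uD HF H1; have E2 := uR HF H3; subst.
  have := sum0 (d i9) S; rewrite (uL1 HF) muln1 (cyc HF) -{1}(dd HF i4) (cyc HF). exact: fin.
- have E1 := uL HF H4; have E2 := uR HF H5; subst.
  have := sum0 i4 S; rewrite (uR1 HF) mul1n (F1 HF) (F2 HF). exact: fin.
- have E1 := uD HF H5; have E2 := uL HF H6; subst.
  have := sum0 (d i5) S; rewrite (uR1 HF) muln1 (cyc2 HF) (cyc2 HF). exact: fin.
- rewrite (dz HF) in S.
  have E1 := uR HF H4; have E2 := uR HF H6; subst.
  have := sum0 i6 S; rewrite (uR1 HF) muln1 (F1 HF). exact: fin.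
Qed.
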